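(* Let $A_1,\ldots,A_n$ be events in a probability space, let $X$ be the number of these events that occur, and for $1\le j\le n$ let $S_j=\sum_{1\le i_1<\cdots<i_j\le n}P(A_{i_1}\cdots A_{i_j})$ (with $S_j=0$ for $j>n$). Then for all integers $r\ge 1$ and $k\ge r$, $$P(X\ge r)=\sum_{j=r}^{k}(-1)^{r+j}\binom{j-1}{r-1}S_j+(-1)^{r+k+1}\sum_{i=1}^{r}\binom{k-i}{r-i}E\left[\binom{X-i}{k-i+1}\right].$$
   Context: Binomial convention: for integers $s,t$, $\binom{t}{s}=0$ if $\min(s,t)<0$ or $s>t$; otherwise $\binom{t}{s}=\frac{t!}{s!(t-s)!}$. $A_{i_1}\cdots A_{i_j}$ denotes the intersection of the events. *)

(* Defs.v *)
From HB Require Import structures.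
From mathcomp Require Import all_boot all_order all_algebra.
From mathcomp Require Import all_classical all_reals all_analysis.
Set Implicit Arguments. Unset Strict Implicit. Unset Printing Implicit Defensive.
Import Order.TTheory GRing.Theory Num.Theory.
Local Open Scope classical_set_scope.
Local Open Scope ring_scope.

(* Binomial coefficient on integers with the paper's convention:
   binz t s = 0 if min(s,t) < 0 or s > t, else t!/(s!(t-s)!). *)
Definition binz (t s : int) : nat :=
  match t, s with
  | Posz t', Posz s' => 'C(t', s')
  | _, _ => 0%N
  end.

Definition num_occ (T : Type) (n : nat) (A : 'I_n -> set T) (x : T) : nat :=
  #|[set i : 'I_n | `[< A i x >]]|.

Definition inter_ev (T : Type) (n : nat) (A : 'I_n -> set T) (I : {set 'I_n}) : set T :=
  [set x | forall i : 'I_n, i \in I -> A i x].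

Definition Sj (d : measure_display) (T : measurableType d) (R : realType)
  (P : probability T R) (n : nat) (A : 'I_n -> set T) (j : nat) : \bar R :=
  (\sum_(I : {set 'I_n} | #|I| == j) P (inter_ev A I))%E.

(* Main.v *)
Require Import Defs.
From HB Require Import structures.
From mathcomp Require Import all_boot all_order all_algebra.
From mathcomp Require Import all_classical all_reals all_analysis.
From mathcomp Require Import ring lra zify.
Import Order.TTheory GRing.Theory Num.Theory.
Local Open Scope classical_set_scope.
Local Open Scope ring_scope.
Set Implicit Arguments. Unset Strict Implicit.

Definition occ (T : Type) (n : nat) (A : 'I_n -> set T) (x : T) : {set 'I_n} :=
  [set i : 'I_n | `[< A i x >]].

Definition atom (T : Type) (n : nat) (A : 'I_n -> set T) (S : {set 'I_n}) : set T :=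
  \big[setI/setT]_(i <- enum 'I_n) (if i \in S then A i else ~` A i).

Lemma atomP (T : Type) (n : nat) (A : 'I_n -> set T) (S : {set 'I_n}) (x : T) :
  atom A S x <-> occ A x = S.
Proof.
rewrite /atom -bigcap_seq; split.
- move=> H; apply/setP => i; rewrite inE.
  have := H i; rewrite /= mem_enum => /(_ isT).
  case: ifP => iS.
    by move=> Ai; apply/asboolP.
  by move=> nAi; apply/negbTE/negP => /asboolP.
- move=> <- i _ /=; rewrite inE; case: (asboolP (A i x)) => //.
Qed.

Lemma atom_meas d (T : measurableType d) (n : nat) (A : 'I_n -> set T)
  (mA : forall i, measurable (A i)) (S : {set 'I_n}) : measurable (atom A S).
Proof.
apply: bigsetI_measurable => i _; case: ifP => _; first exact: mA.
exact: measurableC.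
Qed.

Lemma pred_meas d (T : measurableType d) (n : nat) (A : 'I_n -> set T)
  (mA : forall i, measurable (A i)) (p : pred {set 'I_n}) :
  measurable [set x | p (occ A x)].
Proof.
have -> : [set x | p (occ A x)] = \big[setU/set0]_(S <- enum {set 'I_n} | p S) atom A S.
  rewrite -bigcup_seq_cond; apply/seteqP; split => x /=.
    move=> px; exists (occ A x) => //=; first by rewrite mem_enum.
    exact/atomP.
  by move=> [S /= /andP [_ pS] /atomP ->].
by apply: bigsetU_measurable => S _; exact: atom_meas.
Qed.

Lemma int_occ d (T : measurableType d) (R : realType) (P : probability T R)
  (n : nat) (A : 'I_n -> set T) (mA : forall i, measurable (A i))
  (G : {set 'I_n} -> R) :
  (\int[P]_x (G (occ A x))%:E = (\sum_(S : {set 'I_n}) G S * fine (P (atom A S)))%:E)%E.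
Proof.
have pt : forall x, (G (occ A x))%:E = (\sum_(S : {set 'I_n}) ((G S)%:E * (\1_(atom A S) x)%:E))%E.
  move=> x; rewrite (bigD1 (occ A x)) //= big1 ?adde0.
  - by rewrite indicE mem_set ?mule1 //; apply/atomP.
  - move=> S hS; rewrite indicE memNset ?mule0 //.
    by move/atomP => E; rewrite E eqxx in hS.
under eq_integral do rewrite pt.
rewrite integral_sum //; last first.
  by move=> S; apply: integrableZl => //; apply: integrable_indic; exact: atom_meas.
rewrite -sumEFin; apply: eq_bigr => S _.
rewrite integralZl //; last by apply: integrable_indic; exact: atom_meas.
rewrite integral_indic //; last exact: atom_meas.
rewrite setIT EFinM fineK //.
by apply: fin_num_measure; exact: atom_meas.
Qed.

Lemma prob_pred d (T : measurableType d) (R : realType) (P : probability T R)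
  (n : nat) (A : 'I_n -> set T) (mA : forall i, measurable (A i))
  (p : pred {set 'I_n}) :
  P [set x | p (occ A x)] = (\sum_(S : {set 'I_n}) (p S)%:R * fine (P (atom A S)))%:E.
Proof.
rewrite -[X in P X]setIT -integral_indic //; last exact: pred_meas.
rewrite -(int_occ P mA (fun S => (p S)%:R)).
apply: eq_integral => x _; rewrite indicE.
have -> : (x \in [set x0 | p (occ A x0)]) = p (occ A x) by apply/idP/idP => [/set_mem|?]; [|exact/mem_set].
by [].
Qed.
Lemma base_id (r m : nat) :
  'C(m, r) = (\sum_(1 <= i < r.+1) 'C(m - i, r - i + 1) + (r <= m))%N.
Proof.
elim: r m => [|r IH] m.
  by rewrite big_geq // bin0.
case: m => [|m].
  rewrite bin0n /= big1_seq // => i _; by rewrite sub0n bin0n addn1.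
rewrite binS big_nat_recl // IH.
have -> : (m.+1 - 1 = m)%N by lia.
have -> : (r.+1 - 1 + 1 = r.+1)%N by lia.
rewrite ltnS addnA; congr (_ + _)%N; congr (_ + _)%N.
Qed.

Definition Dk (r m k : nat) : nat :=
  (\sum_(1 <= i < r.+1) 'C(k - i, r - i) * 'C(m - i, k - i + 1))%N.

Definition Tk (r m k i : nat) : nat :=
  (if (i <= r)%N then 'C(k.+1 - i, r - i) * 'C(m.+1 - i, k.+2 - i) else 0)%N.

Lemma step_id (r m k i : nat) : (1 <= i)%N -> (i <= r)%N -> (r <= k)%N ->
  ('C(k - i, r - i) * 'C(m - i, k - i + 1) + 'C(k.+1 - i, r - i) * 'C(m - i, k.+1 - i + 1)
   + Tk r m k i.+1 = Tk r m k i)%N.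
Proof.
move=> h1 hir hrk; rewrite /Tk hir.
have [u hu] : exists u, k = (i + u)%N by exists (k - i)%N; lia.
subst k.
have -> : ((i + u) - i = u)%N by lia.
have -> : ((i + u).+1 - i = u.+1)%N by lia.
have -> : ((i + u).+2 - i = u.+2)%N by lia.
rewrite addn1 addn1.
have [him | hmi] := leqP i m.
  have [v hv] : exists v, m = (i + v)%N by exists (m - i)%N; lia.
  subst m.
  have -> : ((i + v) - i = v)%N by lia.
  have -> : ((i + v).+1 - i = v.+1)%N by lia.
  case: (ltngtP i r) => [hlt||heq]; last first.
  - subst r. rewrite ?ltnn subnn !bin0 !mul1n addn0.
    by rewrite ?mul1n binS addnC.
  - by move=> hri; exfalso; lia.
  rewrite ?hlt.
  have [s hs] : exists s, r = (i + s.+1)%N by exists (r - i.+1)%N; lia.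
  subst r.
  have -> : ((i + s.+1) - i = s.+1)%N by lia.
  have -> : ((i + s.+1) - i.+1 = s)%N by lia.
  have -> : ((i + u).+1 - i.+1 = u)%N by lia.
  have -> : ((i + v).+1 - i.+1 = v)%N by lia.
  have -> : ((i + u).+2 - i.+1 = u.+1)%N by lia.
  rewrite [in RHS]binS [in RHS]binS [in X in (_ + X + _)%N]binS.
  ring.
have -> : (m - i = 0)%N by lia.
have -> : (m.+1 - i = 0)%N by lia.
rewrite !bin0n /= !muln0 add0n.
case: ifP => // _; rewrite !subSS; have -> : (m - i = 0)%N by lia.
rewrite bin0n; have -> : ((i + u).+1 - i == 0)%N = false by apply/negbTE; lia.
by rewrite muln0.
Qed.

Lemma Drec (r m k : nat) : (1 <= r)%N -> (r <= k)%N ->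
  (Dk r m k + Dk r m k.+1 = 'C(k, r.-1) * 'C(m, k.+1))%N.
Proof.
move=> hr hrk; rewrite /Dk -big_split /=.
have E : (\sum_(1 <= i < r.+1) ('C(k - i, r - i) * 'C(m - i, k - i + 1) +
   'C(k.+1 - i, r - i) * 'C(m - i, k.+1 - i + 1)) + \sum_(1 <= i < r.+1) Tk r m k i.+1
   = \sum_(1 <= i < r.+1) Tk r m k i)%N.
  rewrite -big_split /=; apply: eq_big_nat => i /andP [h1 h2].
  by apply: step_id => //; lia.
have E1 : (\sum_(1 <= i < r.+1) Tk r m k i.+1 = \sum_(1 <= i < r) Tk r m k i.+1)%N.
  by rewrite big_nat_recr //= [Tk r m k r.+1]/Tk ltnn addn0.
have E2 : (\sum_(1 <= i < r.+1) Tk r m k i = Tk r m k 1 + \sum_(1 <= i < r) Tk r m k i.+1)%N.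
  by rewrite big_nat_recl.
move: E; rewrite E1 E2 [(Tk r m k 1 + _)%N]addnC => /(f_equal (fun x => x - \sum_(1 <= i < r) Tk r m k i.+1)%N); rewrite addnK addKn => ->.
rewrite /Tk hr; congr (_ * _)%N; congr 'C(_, _); lia.
Qed.

Lemma pw_id (R : realType) (m r k : nat) : (1 <= r)%N -> (r <= k)%N ->
  ((r <= m)%:R : R) = \sum_(r <= j < k.+1) (-1) ^+ (r + j) * ('C(j.-1, r.-1))%:R * ('C(m, j))%:R
    + (-1) ^+ (r + k + 1) * (Dk r m k)%:R.
Proof.
move=> hr hrk.
have [c ->] : exists c, k = (r + c)%N by exists (k - r)%N; lia.
elim: c => [|c IH].
  rewrite addn0 big_nat1 -signr_odd addnn odd_double expr0 mul1r binn mul1r.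
  rewrite /Dk.
  have -> : (\sum_(1 <= i < r.+1) 'C(r - i, r - i) * 'C(m - i, r - i + 1)
     = \sum_(1 <= i < r.+1) 'C(m - i, r - i + 1))%N.
    by apply: eq_bigr => i _; rewrite binn mul1n.
  rewrite (base_id r m) natrD addn1 exprS -signr_odd odd_double expr0 mulr1.
  ring.
rewrite addnS IH [in RHS]big_nat_recr /=; last lia.
have := @Drec r m (r + c) hr (leq_addr c r) => /(congr1 (fun x => x%:R : R)).
rewrite natrD natrM => H.
have -> : (Dk r m (r + c).+1)%:R = ('C(r + c, r.-1)%:R * 'C(m, (r + c).+1)%:R - (Dk r m (r + c))%:R : R).
  by rewrite -H; ring.
rewrite !addnS ?addn1 ?addn0 !exprS.
ring.
Qed.

Lemma binzE (m i k : nat) :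
  binz (m%:Z - i%:Z) ((k - i + 1)%N)%:Z = 'C(m - i, k - i + 1).
Proof.
have [him | hmi] := leqP i m.
  by rewrite subzn.
have -> : (m - i = 0)%N by lia.
rewrite bin0n addn1 /=.
have : (m%:Z - i%:Z < 0)%R by rewrite subr_lt0 ltz_nat.
by case: (m%:Z - i%:Z).
Qed.

Lemma pw' (R : realType) (m r k : nat) : (1 <= r)%N -> (r <= k)%N ->
  ((r <= m)%:R : R) = \sum_(r <= j < k.+1) ((-1) ^+ (r + j) * ('C(j.-1, r.-1))%:R) * ('C(m, j))%:R
    + (-1) ^+ (r + k + 1) * \sum_(1 <= i < r.+1) ('C(k - i, r - i))%:R *
        (binz (m%:Z - i%:Z) ((k - i + 1)%N)%:Z)%:R.
Proof.
move=> hr hrk; rewrite (@pw_id R m r k hr hrk); congr (_ + _ * _).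
rewrite /Dk natr_sum; apply: eq_bigr => i _; by rewrite natrM binzE.
Qed.

Lemma swap_sum (R : realType) (n : nat) (s : seq nat) (F : nat -> R)
  (G : nat -> {set 'I_n} -> R) (q : {set 'I_n} -> R) :
  \sum_(S : {set 'I_n}) (\sum_(j <- s) F j * G j S) * q S = \sum_(j <- s) F j * \sum_(S : {set 'I_n}) G j S * q S.
Proof.
rewrite (eq_bigr (fun S => \sum_(j <- s) F j * G j S * q S)); last first.
  by move=> S _; rewrite mulr_suml.
rewrite exchange_big; apply: eq_bigr => j _; rewrite mulr_sumr.
by apply: eq_bigr => S _; rewrite mulrA.
Qed.

Lemma SjE d (T : measurableType d) (R : realType) (P : probability T R)
  (n : nat) (A : 'I_n -> set T) (mA : forall i, measurable (A i)) (j : nat) :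
  Sj P A j = (\sum_(S : {set 'I_n}) ('C(#|S|, j))%:R * fine (P (atom A S)))%:E.
Proof.
rewrite /Sj.
transitivity (\sum_(I : {set 'I_n} | #|I| == j)
   (\sum_(S : {set 'I_n}) (I \subset S)%:R * fine (P (atom A S)))%:E)%E.
  apply: eq_bigr => I _; rewrite -(prob_pred P mA (fun S => I \subset S)); congr (P _); apply/seteqP; split => x /=.
  - move=> H; apply/fintype.subsetP => i iI; rewrite inE; apply/asboolP; exact: H.
  - by move=> /fintype.subsetP H i iI; have := H i iI; rewrite inE => /asboolP.
rewrite sumEFin; congr (_%:E); rewrite exchange_big /=; apply: eq_bigr => S _.
rewrite -mulr_suml; congr (_ * _).
rewrite -natr_sum; congr (_%:R).
rewrite -cards_draws.
transitivity (\sum_(I : {set 'I_n} | #|I| == j) (if I \subset S then 1 else 0))%N.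
  by apply: eq_bigr => I _; case: (I \subset S).
rewrite -big_mkcondr sum1dep_card; apply: eq_card => I; rewrite !inE andbC.
by [].
Qed.

Lemma num_occE (T : Type) (n : nat) (A : 'I_n -> set T) (x : T) :
  num_occ A x = #|occ A x|.
Proof.
rewrite /num_occ; apply: eq_card => i; rewrite inE.
by apply/idP/idP => [/set_mem|?]; [|exact/mem_set].
Qed.

Unset Implicit Arguments.

Theorem theorem2 (d : measure_display) (T : measurableType d) (R : realType)
  (P : probability T R) (n : nat) (A : 'I_n -> set T)
  (mA : forall i, measurable (A i)) (r k : nat) (hr : (1 <= r)%N) (hrk : (r <= k)%N) :
  P [set x | (r <= num_occ A x)%N] =
  (\sum_(r <= j < k.+1) (((-1) ^+ (r + j) * ('C(j.-1, r.-1))%:R : R)%:E * Sj P A j)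
   + ((-1) ^+ (r + k + 1) : R)%:E *
     \sum_(1 <= i < r.+1)
        (('C(k - i, r - i))%:R : R)%:E *
        \int[P]_x ((binz ((num_occ A x)%:Z - i%:Z) ((k - i + 1)%N)%:Z)%:R : R)%:E)%E.
Proof.
pose q S := fine (P (atom A S)).
have HL : P [set x | (r <= num_occ A x)%N] = (\sum_(S : {set 'I_n}) (r <= #|S|)%:R * q S)%:E.
  have -> : [set x | (r <= num_occ A x)%N] = [set x | (r <= #|occ A x|)%N].
    by apply/seteqP; split => x /=; rewrite num_occE.
  exact (prob_pred P mA (fun S => (r <= #|S|)%N)).
have HI : forall i, (\int[P]_x ((binz ((num_occ A x)%:Z - i%:Z) ((k - i + 1)%N)%:Z)%:R : R)%:E
   = (\sum_(S : {set 'I_n}) (binz (#|S|%:Z - i%:Z) ((k - i + 1)%N)%:Z)%:R * q S)%:E)%E.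
  move=> i; under eq_integral do rewrite num_occE.
  exact (int_occ P mA (fun S => (binz (#|S|%:Z - i%:Z) ((k - i + 1)%N)%:Z)%:R)).
rewrite HL.
have -> : (\sum_(r <= j < k.+1) (((-1) ^+ (r + j) * ('C(j.-1, r.-1))%:R : R)%:E * Sj P A j))%E
  = (\sum_(r <= j < k.+1) ((-1) ^+ (r + j) * ('C(j.-1, r.-1))%:R) *
       \sum_(S : {set 'I_n}) ('C(#|S|, j))%:R * q S)%:E.
  by rewrite -sumEFin; apply: eq_bigr => j _; rewrite SjE // -EFinM.
have -> : (\sum_(1 <= i < r.+1)
        (('C(k - i, r - i))%:R : R)%:E *
        \int[P]_x ((binz ((num_occ A x)%:Z - i%:Z) ((k - i + 1)%N)%:Z)%:R : R)%:E)%E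
  = (\sum_(1 <= i < r.+1) ('C(k - i, r - i))%:R *
       \sum_(S : {set 'I_n}) (binz (#|S|%:Z - i%:Z) ((k - i + 1)%N)%:Z)%:R * q S)%:E.
  by rewrite -sumEFin; apply: eq_bigr => i _; rewrite HI -EFinM.
rewrite -EFinM -EFinD; congr (_%:E).
transitivity (\sum_(S : {set 'I_n})
   ((\sum_(r <= j < k.+1) ((-1) ^+ (r + j) * ('C(j.-1, r.-1))%:R) * ('C(#|S|, j))%:R) * q S
   + (-1) ^+ (r + k + 1) * ((\sum_(1 <= i < r.+1) ('C(k - i, r - i))%:R *
        (binz (#|S|%:Z - i%:Z) ((k - i + 1)%N)%:Z)%:R) * q S))).
  apply: eq_bigr => S _.
  rewrite (@pw' R #|S| r k hr hrk) mulrDl mulrA.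
  by [].
rewrite big_split /=. congr (_ + _).
  exact: swap_sum.
rewrite -mulr_sumr. congr (_ * _).
exact: swap_sum.
Qed.
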